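(* Consider the discrete-time $Geo^X/G_r^{(a,b)}/1$ queue with single ($\delta=0$) or multiple ($\delta=1$) vacations described in the context, and let $p_{n,0}$, $p_{n,r}(u)$, $Q_n(u)$ be nonnegative numbers satisfying the stationary equations (E1)–(E8) and the normalization condition (N) given there. Then $$\tau:=\sum_{m=0}^{\infty}\sum_{r=a}^{b}p_{m,r}(1)+\sum_{m=0}^{\infty}Q_m(1)=\frac{1-(1-\delta)\sum_{n=0}^{a-1}p_{n,0}}{\omega},$$ where $$\omega=\sum_{n=0}^{a-1}\Big[p^+_nE(V)+\delta Q^+_nE(V)+(1-\delta)Q^+_n\Big\{\sum_{j=n}^{a-1}e_{j,n}\Big(\sum_{i=a}^{b}g_{i-j}s_i+\sum_{i=b+1-j}^{\infty}g_is_b\Big)\Big\}\Big]+\sum_{n=a}^{b}(p^+_n+Q^+_n)s_n+\sum_{n=b+1}^{\infty}(p^+_n+Q^+_n)s_b .$$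
   Context: Time is slotted. Fix integers $1\le a\le b$, a number $\lambda\in(0,1)$ with $\bar\lambda=1-\lambda$, and a group-size distribution $(g_m)_{m\ge1}$ ($g_m\ge0$, $\sum_m g_m=1$, finite mean $\bar g$, pgf $G(z)=\sum_{m\ge1}g_mz^m$); put $g_m=0$ for $m\le0$. In each slot a group of customers arrives with probability $\lambda$, its size having distribution $(g_m)$ (compound Bernoulli arrivals). Service is by the general bulk rule $(a,b)$: service starts only if at least $a$ customers wait; if $r$ wait with $a\le r\le b$ all are taken, if more than $b$ wait exactly $b$ are taken. The service time of a batch of size $r$ ($a\le r\le b$) has pmf $s_r(n)$, $n\ge1$, pgf $S_r^*(z)=\sum_{n\ge1}s_r(n)z^n$ and finite mean $s_r=\sum_n n s_r(n)$; $\mu_b=1/s_b$. Vacation times have pmf $v_n$, $n\ge1$, pgf $V^*(z)=\sum_{n\ge1}v_nz^n$ and finite mean $E(V)$. $\delta=0$ means single vacation (after a vacation, if fewer than $a$ customers wait, the server stays dormant until $a$ have accumulated), $\delta=1$ means multiple vacations (the server keeps taking vacations until at least $a$ wait). It is assumed $\rho=\lambda\bar g/(b\mu_b)<1$. Stationary probabilities: $p_{n,0}$ ($0\le n\le a-1$; server dormant, $n$ waiting), $p_{n,r}(u)$ ($n\ge0$, $a\le r\le b$, $u\ge1$; server busy with a batch of size $r$, $n$ waiting, remaining service time $u$), $Q_n(u)$ ($n\ge0$, $u\ge1$; server on vacation, $n$ waiting, remaining vacation time $u$). They satisfy: (E1) $p_{0,0}=(1-\delta)[\bar\lambda p_{0,0}+\bar\lambda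 Q_0(1)]$; (E2) $p_{n,0}=(1-\delta)[\bar\lambda p_{n,0}+\lambda\sum_{i=1}^ng_ip_{n-i,0}+\bar\lambda Q_n(1)+\lambda\sum_{i=1}^ng_iQ_{n-i}(1)]$, $1\le n\le a-1$; (E3) for $a\le r\le b$, $u\ge1$: $p_{0,r}(u)=\bar\lambda p_{0,r}(u+1)+s_r(u)\big[\sum_{m=a}^b\big(\bar\lambda p_{r,m}(1)+\lambda\sum_{i=1}^rg_ip_{r-i,m}(1)\big)+\bar\lambda Q_r(1)+\lambda\sum_{i=1}^rg_iQ_{r-i}(1)+(1-\delta)\lambda\sum_{i=0}^{a-1}g_{r-i}p_{i,0}\big]$; (E4) for $n\ge1$, $a\le r\le b-1$, $u\ge1$: $p_{n,r}(u)=\bar\lambda p_{n,r}(u+1)+\lambda\sum_{i=1}^ng_ip_{n-i,r}(u+1)$; (E5) for $n\ge1$, $u\ge1$: $p_{n,b}(u)=\bar\lambda p_{n,b}(u+1)+\lambda\sum_{i=1}^ng_ip_{n-i,b}(u+1)+s_b(u)\big[\sum_{m=a}^b\big(\bar\lambda p_{n+b,m}(1)+\lambda\sum_{i=1}^{n+b}g_ip_{n+b-i,m}(1)\big)+\bar\lambda Q_{n+b}(1)+\lambda\sum_{i=1}^{n+b}g_iQ_{n+b-i}(1)+(1-\delta)\lambda\sum_{i=0}^{a-1}g_{n+b-i}p_{i,0}\big]$; (E6) $Q_0(u)=\bar\lambda Q_0(u+1)+\bar\lambda\big(\sum_{m=a}^bp_{0,m}(1)+\delta Q_0(1)\big)v_u$;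 (E7) for $1\le n\le a-1$: $Q_n(u)=\bar\lambda Q_n(u+1)+\lambda\sum_{i=1}^ng_iQ_{n-i}(u+1)+v_u\big[\bar\lambda\big(\sum_{m=a}^bp_{n,m}(1)+\delta Q_n(1)\big)+\lambda\sum_{i=1}^ng_i\big(\sum_{m=a}^bp_{n-i,m}(1)+\delta Q_{n-i}(1)\big)\big]$; (E8) for $n\ge a$: $Q_n(u)=\bar\lambda Q_n(u+1)+\lambda\sum_{i=1}^ng_iQ_{n-i}(u+1)$; (N) $(1-\delta)\sum_{n=0}^{a-1}p_{n,0}+\sum_{n\ge0}\sum_{r=a}^b\sum_{u\ge1}p_{n,r}(u)+\sum_{n\ge0}\sum_{u\ge1}Q_n(u)=1$. Probabilities at service-completion / vacation-termination epochs: with $\tau$ as in the claim, $p^+_{0,r}=\tau^{-1}\bar\lambda p_{0,r}(1)$, $p^+_{n,r}=\tau^{-1}(\bar\lambda p_{n,r}(1)+\lambda\sum_{i=1}^ng_ip_{n-i,r}(1))$ for $n\ge1$, $a\le r\le b$; $p^+_n=\sum_{r=a}^bp^+_{n,r}$; $Q^+_0=\tau^{-1}\bar\lambda Q_0(1)$, $Q^+_n=\tau^{-1}(\bar\lambda Q_n(1)+\lambda\sum_{i=1}^ng_iQ_{n-i}(1))$ for $n\ge1$. The numbers $e_{n,i}$ ($0\le i\le n$) are defined by $e_{n,n}=1$, $e_{n,n-1}=g_1$, and $e_{n,i}=\sum_{j=i+1}^{n-1}e_{n,j}g_{j-i}+g_{n-i}$ for $0\le i\le n-2$. *)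

(* Defs.v *)
From mathcomp Require Import all_boot all_order all_algebra.
From mathcomp Require Import all_classical all_reals all_analysis.
Set Implicit Arguments. Unset Strict Implicit. Unset Printing Implicit Defensive.
Import Order.TTheory GRing.Theory Num.Theory.
Local Open Scope ring_scope.

Section Defs.
Variable R : realType.

Definition esum_from (m : nat) (f : nat -> R) : \bar R :=
  (\sum_(m <= n <oo) (f n)%:E)%E.

(* e_{n,i}:  e_{n,n} = 1, e_{n,n-1} = g_1,
   e_{n,i} = sum_{j=i+1}^{n-1} e_{n,j} g_{j-i} + g_{n-i}  (0 <= i <= n-2);
   [fuel] bounds the recursion depth (fuel = n - i + 1 suffices). *)
Fixpoint e_aux (g : nat -> R) (n fuel i : nat) : R :=
  match fuel with
  | 0 => 0
  | fuel'.+1 =>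
      if i == n then 1
      else if i == n.-1 then g 1%N
      else \sum_(i.+1 <= j < n) e_aux g n fuel' j * g (j - i)%N + g (n - i)%N
  end.
Definition e_coef (g : nat -> R) (n i : nat) : R := e_aux g n (n - i).+1 i.

(* mean of a pmf f on {1,2,...} (f 0 = 0), as an extended real *)
Definition emean (f : nat -> R) : \bar R := esum_from 0 (fun n => n%:R * f n).

Definition tauE (a b : nat) (p : nat -> nat -> nat -> R) (Q : nat -> nat -> R)
  : \bar R :=
  (esum_from 0 (fun m => (\sum_(a <= r < b.+1) p m r 1%N)%R)
   + esum_from 0 (fun m => Q m 1%N))%E.

(* p^+_{n,r} and Q^+_n (the n = 0 case is the n >= 1 formula with empty sum) *)
Definition pplus_r (lam tau : R) (g : nat -> R) (p : nat -> nat -> nat -> R)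
  (n r : nat) : R :=
  tau^-1 * ((1 - lam) * p n r 1%N
            + lam * \sum_(1 <= i < n.+1) g i * p (n - i)%N r 1%N).
Definition pplus (a b : nat) (lam tau : R) (g : nat -> R)
  (p : nat -> nat -> nat -> R) (n : nat) : R :=
  \sum_(a <= r < b.+1) pplus_r lam tau g p n r.
Definition Qplus (lam tau : R) (g : nat -> R) (Q : nat -> nat -> R) (n : nat) : R :=
  tau^-1 * ((1 - lam) * Q n 1%N
            + lam * \sum_(1 <= i < n.+1) g i * Q (n - i)%N 1%N).

(* omega, with smean r = s_r (mean service time of a batch of size r),
   EV = E(V), delta in {0,1}. *)
Definition omegaE (a b : nat) (lam delta tau EV : R) (g : nat -> R)
  (smean : nat -> R) (p : nat -> nat -> nat -> R) (Q : nat -> nat -> R)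
  : \bar R :=
  let pp := pplus a b lam tau g p in
  let qp := Qplus lam tau g Q in
  ((\sum_(0 <= n < a)
      ((pp n * EV + delta * qp n * EV)%R%:E
       + ((1 - delta) * qp n)%R%:E *
         \sum_(n <= j < a)
           ((e_coef g j n)%:E *
            ((\sum_(a <= i < b.+1) g (i - j)%N * smean i)%R%:E
             + esum_from (b.+1 - j)%N (fun i => (g i * smean b)%R)))))
   + (\sum_(a <= n < b.+1) (pp n + qp n) * smean n)%R%:E
   + esum_from b.+1 (fun n => ((pp n + qp n) * smean b)%R))%E.

End Defs.

(* Main.v *)
Require Import Defs.
From mathcomp Require Import all_boot all_order all_algebra.
From mathcomp Require Import all_classical all_reals all_analysis.
From mathcomp Require Import ring lra zify.
Import Order.TTheory GRing.Theory Num.Theory.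
Local Open Scope ring_scope.

Set Implicit Arguments. Unset Strict Implicit. Unset Printing Implicit Defensive.

Section G1.
Variable R : realType.
Local Open Scope ereal_scope.

Lemma eser_fin (f : nat -> \bar R) m n : (m <= n)%N ->
  (forall i, (n <= i)%N -> f i = 0) ->
  \sum_(m <= i <oo) f i = \sum_(m <= i < n) f i.
Proof.
move=> mn f0; apply: lim_near_cst => //; near=> N.
have nN : (n <= N)%N by near: N; exists n.
rewrite (@big_cat_nat _ _ _ n) /= ?[X in (_ + X)%E]big1_seq ?adde0 //.
by move=> i /andP[_]; rewrite mem_index_iota => /andP[+ _]; exact: f0.
Unshelve. all: by end_near. Qed.

Lemma esum_ge0 m (f : nat -> R) : (forall n, (m <= n)%N -> (0 <= f n)%R) ->
  0 <= esum_from m f.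
Proof. by move=> f0; apply: nneseries_ge0 => n mn _; rewrite lee_fin f0. Qed.

Lemma esum_S k (f : nat -> R) : (forall n, (k <= n)%N -> (0 <= f n)%R) ->
  esum_from k f = (f k)%:E + esum_from k.+1 f.
Proof.
move=> f0; rewrite /esum_from (nneseries_split k 1); last first.
  by move=> i ki; rewrite lee_fin f0 //.
by rewrite addn1 big_nat1.
Qed.

Lemma esum_tail_le k k' (f : nat -> R) : (forall n, (0 <= f n)%R) -> (k <= k')%N ->
  esum_from k' f <= esum_from k f.
Proof.
move=> f0 kk; rewrite /esum_from (nneseries_split k (k' - k)); last first.
  by move=> i _; rewrite lee_fin f0 //.
rewrite subnKC // leeDr //; apply: sume_ge0 => i _; rewrite lee_fin f0 //.
Qed.

Lemma esum_Zr k (f : nat -> R) c : (forall n, (0 <= f n)%R) ->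
  esum_from k (fun i => f i * c)%R = c%:E * esum_from k f.
Proof.
move=> f0; rewrite /esum_from -nneseriesZl; last by move=> i _; rewrite lee_fin.
by apply: eq_eseriesr => i _; rewrite EFinM muleC.
Qed.

Lemma esum_Zl k (f : nat -> R) c : (forall n, (0 <= f n)%R) ->
  esum_from k (fun i => c * f i)%R = c%:E * esum_from k f.
Proof.
move=> f0; rewrite /esum_from -nneseriesZl; last by move=> i _; rewrite lee_fin.
by apply: eq_eseriesr => i _; rewrite EFinM.
Qed.

Lemma esum_fin_le k (f : nat -> R) : (forall n, (0 <= f n)%R) ->
  esum_from 0 f < +oo -> esum_from k f \is a fin_num.
Proof.
move=> f0 fin; rewrite ge0_fin_numE; last exact: esum_ge0.
by apply: le_lt_trans fin; apply: esum_tail_le.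
Qed.

Lemma inter_from (f : nat -> nat -> \bar R) k :
  (forall i j, (k <= j)%N -> 0 <= f i j) ->
  \sum_(0 <= i <oo) \sum_(k <= j <oo) f i j =
  \sum_(k <= j <oo) \sum_(0 <= i <oo) f i j.
Proof.
move=> f0.
pose h i j := if (k <= j)%N then f i j else 0.
have h0 i j : 0 <= h i j by rewrite /h; case: ifPn => // /f0.
transitivity (\sum_(0 <= i <oo) \sum_(0 <= j <oo) h i j).
  apply: eq_eseriesr => i _; rewrite ereal_series eseries_mkcond.
  by [].
rewrite (@nneseries_interchange R h xpredT xpredT) //.
rewrite [RHS]ereal_series [RHS]eseries_mkcond.
apply: eq_eseriesr => j _; rewrite /h; case: ifPn => // _.
by rewrite eseries0.
Qed.

Lemma nneseries_sum_range (f : nat -> nat -> \bar R) m n N :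
  (forall i j, (m <= i < n)%N -> 0 <= f i j) ->
  \sum_(N <= j <oo) \sum_(m <= i < n) f i j =
  \sum_(m <= i < n) \sum_(N <= j <oo) f i j.
Proof.
elim: n => [|n ih] f0.
  by rewrite big_geq// eseries0// => i; rewrite big_geq.
have [mn|nm] := leqP m n; last first.
  by rewrite big_geq// eseries0// => i; rewrite big_geq.
rewrite big_nat_recr// -ih/=; last first.
  by move=> i j /andP[mi ni]; apply: f0; rewrite mi ltnS ltnW.
rewrite -nneseriesD//.
- by apply: eq_eseriesr => i _; rewrite big_nat_recr.
- move=> i _ _; rewrite big_nat_cond; apply: sume_ge0 => k /andP[/andP[mk kn] _].
  by apply: f0; rewrite mk ltnS ltnW.
- by move=> i _ _; apply: f0; apply/andP; split.
Qed.

Lemma esum_large (f : nat -> R) e : (0 < e)%R ->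
  (forall u, (1 <= u)%N -> (e <= f u)%R) -> esum_from 1 f = +oo.
Proof.
move=> e0 fe.
have f0 u : (1 <= u)%N -> (0 <= f u)%R by move=> u1; apply: le_trans (fe u u1); exact: ltW.
have gt N : ((N%:R * e)%:E <= esum_from 1 f).
  apply: le_trans (nneseries_lim_ge (P := xpredT) N.+1 _); last first.
    by move=> n n1 _; rewrite lee_fin f0 //.
  rewrite sumEFin lee_fin.
  have -> : (N%:R * e = \sum_(1 <= i < N.+1) e)%R.
    by rewrite sumr_const_nat subn1 /= mulr_natl.
  by apply: ler_sum_nat => i /andP[i1 _]; apply: fe.
move: (esum_ge0 f0); case E: (esum_from 1 f) => [x| |] // x0.
have := gt (Num.trunc (x / e)).+1.
rewrite E lee_fin => H.
have := truncnS_gt (x / e).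
rewrite ltr_pdivrMr // => H2.
by have := lt_le_trans H2 H; rewrite ltxx.
Qed.

End G1.

Set Implicit Arguments. Unset Strict Implicit. Unset Printing Implicit Defensive.

Section G2.
Variable R : realType.
Local Open Scope ereal_scope.

Lemma conv_esum (g X : nat -> R) : g 0%N = 0%R -> (forall m, (0 <= g m)%R) ->
  esum_from 0 g = 1 -> (forall n, (0 <= X n)%R) -> esum_from 0 X < +oo ->
  esum_from 0 (fun n => \sum_(1 <= i < n.+1) g i * X (n - i)%N)%R = esum_from 0 X.
Proof.
move=> g0 gge0 g1 X0 Xfin.
have Sfin : esum_from 0 X \is a fin_num.
  by rewrite ge0_fin_numE //; exact: esum_ge0.
have F0 i n : 0 <= (g i * X n)%:E by rewrite lee_fin mulr_ge0.
transitivity (\sum_(0 <= n <oo) \sum_(0 <= i <oo)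
   (if (i <= n)%N then (g i * X (n - i)%N)%:E else 0)).
  apply: eq_eseriesr => n _.
  rewrite (@eser_fin _ _ 0 n.+1) //; last by move=> i; rewrite ltnNge => /negbTE ->.
  rewrite -sumEFin [in RHS]big_ltn // leq0n g0 mul0r add0e.
  by apply: eq_big_nat => i /andP[_]; rewrite ltnS => ->.
rewrite (@nneseries_interchange R _ xpredT xpredT); last first.
  by move=> i j; case: ifPn.
transitivity (\sum_(0 <= i <oo) ((fine (esum_from 0 X)) * g i)%:E).
  apply: eq_eseriesr => i _.
  rewrite -(@eseries_mkcond _ (fun n => (i <= n)%N)) -ereal_series.
  rewrite -nneseries_addn; last by move=> n.
  under eq_eseriesr do rewrite addnK.
  have := esum_Zl 0 (g i) X0; rewrite /esum_from => ->; rewrite -/(esum_from 0 X) -{1}(fineK Sfin).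
  by rewrite -EFinM mulrC.
have := esum_Zl 0 (fine (esum_from 0 X)) gge0.
by rewrite g1 mule1 fineK // /esum_from => ->.
Qed.

Lemma eq_eseries_from (f h : nat -> \bar R) N :
  (forall i, (N <= i)%N -> f i = h i) ->
  \sum_(N <= i <oo) f i = \sum_(N <= i <oo) h i.
Proof.
move=> fh; apply/congr_lim/funext => n; apply: eq_big_nat => i /andP[Ni _].
exact: fh.
Qed.

Lemma bal_esum (lam : R) (g X : nat -> R) : (0 <= lam <= 1)%R ->
  g 0%N = 0%R -> (forall m, (0 <= g m)%R) ->
  esum_from 0 g = 1 -> (forall n, (0 <= X n)%R) -> esum_from 0 X < +oo ->
  esum_from 0 (fun n => (1 - lam) * X n + lam * \sum_(1 <= i < n.+1) g i * X (n - i)%N)%R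
  = esum_from 0 X.
Proof.
move=> /andP[l0 l1] g0 gge0 g1 X0 Xfin.
have Sfin : esum_from 0 X \is a fin_num.
  by rewrite ge0_fin_numE //; exact: esum_ge0.
have C0 n : (0 <= \sum_(1 <= i < n.+1) g i * X (n - i)%N)%R.
  by apply: sumr_ge0 => i _; rewrite mulr_ge0.
rewrite /esum_from; under eq_eseriesr do rewrite EFinD.
rewrite nneseriesD; last 2 first.
- by move=> i _ _; rewrite lee_fin mulr_ge0 // subr_ge0.
- by move=> i _ _; rewrite lee_fin mulr_ge0.
under eq_eseriesr do rewrite EFinM.
rewrite nneseriesZl; last by move=> i _; rewrite lee_fin.
under [X in _ + X]eq_eseriesr do rewrite EFinM.
rewrite nneseriesZl; last by move=> i _; rewrite lee_fin.
have := conv_esum g0 gge0 g1 X0 Xfin; rewrite /esum_from => ->.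
rewrite -/(esum_from 0 X) -(fineK Sfin) -!EFinM -EFinD; congr (_%:E); ring.
Qed.

Lemma renewal (s P : nat -> R) (A : R) :
  s 0%N = 0%R -> (forall n, (0 <= s n)%R) -> esum_from 0 s = 1 ->
  emean s < +oo -> (0 <= A)%R ->
  (forall u, (1 <= u)%N -> (0 <= P u)%R) -> esum_from 1 P < +oo ->
  (forall u, (1 <= u)%N -> P u = P u.+1 + s u * A)%R ->
  P 1%N = A /\ esum_from 1 P = (A * fine (emean s))%:E.
Proof.
move=> s0 sge0 s1 smean A0 P0 Pfin Prec.
have s1fin : esum_from 0 s < +oo by rewrite s1 ltry.
pose S u := fine (esum_from u s).
have Sfin u : esum_from u s \is a fin_num by apply: esum_fin_le.
have SE u : (S u)%:E = esum_from u s by rewrite fineK.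
have S0 u : (0 <= S u)%R by rewrite -lee_fin SE; apply: esum_ge0.
have Srec u : S u = (s u + S u.+1)%R.
  by apply: EFin_inj; rewrite SE EFinD SE; apply: esum_S.
have S1 : S 1%N = 1%R.
  apply: EFin_inj; rewrite SE; move: s1; rewrite esum_S // s0 add0e => ->.
  by [].
have meanE : esum_from 1 S = emean s.
  transitivity (\sum_(1 <= u <oo) \sum_(0 <= k <oo)
      (if (u <= k)%N then (s k)%:E else 0)).
    apply: eq_eseriesr => u _; rewrite SE /esum_from.
    rewrite ereal_series eseries_mkcond.
    by [].
  rewrite -inter_from; last by move=> i j _; case: ifPn => //; rewrite lee_fin.
  apply: eq_eseriesr => k _.
  rewrite (@eser_fin _ _ 1 k.+1) //; last first.
    by move=> i; rewrite ltnNge => /negbTE ->.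
  rewrite (@eq_big_nat _ _ _ 1 k.+1 _ (fun=> (s k)%:E)); last first.
    by move=> i /andP[_]; rewrite ltnS => ->.
  by rewrite sumEFin sumr_const_nat subn1 /= mulr_natl.
have Sfin1 : esum_from 1 S < +oo by rewrite meanE.
pose c u := (P u - A * S u)%R.
have cS u : (1 <= u)%N -> c u.+1 = c u.
  by move=> u1; rewrite /c (Prec u u1) (Srec u); ring.
have cc u : (1 <= u)%N -> c u = c 1%N.
  elim: u => // u IH; rewrite ltnS leq_eqVlt => /orP[/eqP <- //|u1].
  by rewrite cS // IH.
have c1 : c 1%N = 0%R.
  case: (ltgtP (c 1%N) 0%R) => // [cn|cp]; exfalso.
  - have AS u : (1 <= u)%N -> (- c 1%N <= A * S u)%R.
      move=> u1; rewrite -(cc u u1) /c; have := P0 u u1; lra.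
    have Ap : (0 < A)%R.
      rewrite lt_def A0 andbT; apply/eqP => A00.
      by have := AS 1%N isT; rewrite A00 mul0r; lra.
    have := esum_large (e := (- c 1%N / A)%R) (f := S) _ _.
    rewrite divr_gt0 ?oppr_gt0 // => /(_ isT) H.
    suff: esum_from 1 S = +oo by move=> E; rewrite E in Sfin1.
    apply: H => u u1; rewrite ler_pdivrMr // mulrC; exact: AS.
  - have := esum_large (e := c 1%N) (f := P) cp.
    suff H: forall u, (1 <= u)%N -> (c 1%N <= P u)%R.
      by move=> /(_ H) E; rewrite E in Pfin.
    move=> u u1; rewrite -(cc u u1) /c; have := mulr_ge0 A0 (S0 u); lra.
have PE u : (1 <= u)%N -> P u = (A * S u)%R.
  by move=> u1; have := cc u u1; rewrite c1 /c => /eqP; rewrite subr_eq0 => /eqP.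
split; first by rewrite PE // S1 mulr1.
rewrite /esum_from (eq_eseries_from (h := fun u => (A * S u)%:E)); last first.
  by move=> u u1; rewrite PE.
have := esum_Zl 1 A S0; rewrite /esum_from => ->.
have Emfin : emean s \is a fin_num.
  by rewrite ge0_fin_numE // /emean; apply: esum_ge0 => n _; rewrite mulr_ge0.
by rewrite -/(esum_from 1 S) meanE EFinM fineK.
Qed.

End G2.

Set Implicit Arguments. Unset Strict Implicit. Unset Printing Implicit Defensive.

Section G3.
Variable R : realType.

Lemma tri1 (F : nat -> nat -> R) j :
  \sum_(1 <= i < j.+1) \sum_(0 <= n < (j - i).+1) F i n =
  \sum_(0 <= n < j) \sum_(1 <= i < (j - n).+1) F i n.
Proof.
transitivity (\sum_(1 <= i < j.+1) \sum_(0 <= n < j)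
   (if (i + n <= j)%N then F i n else 0)).
  apply: eq_big_nat => i /andP[i1 ij].
  rewrite (@big_nat_widen _ _ _ 0 (j - i).+1 j); last by lia.
  rewrite big_mkcondr; apply: eq_bigr => n _.
  by have -> : (n < (j - i).+1)%N = (i + n <= j)%N by apply/idP/idP; lia.
rewrite exchange_big_nat; apply: eq_big_nat => n /andP[_ nj].
rewrite [RHS](@big_nat_widen _ _ _ 1 (j - n).+1 j.+1); last by lia.
rewrite big_mkcondr; apply: eq_bigr => i _.
by have -> : (i < (j - n).+1)%N = (i + n <= j)%N by apply/idP/idP; lia.
Qed.

Lemma tri2 (H : nat -> nat -> R) a :
  \sum_(0 <= n < a) \sum_(n <= j < a) H n j =
  \sum_(0 <= j < a) \sum_(0 <= n < j.+1) H n j.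
Proof.
transitivity (\sum_(0 <= n < a) \sum_(0 <= j < a)
   (if (n <= j)%N then H n j else 0)).
  apply: eq_big_nat => n _.
  by rewrite (@big_nat_widenl _ _ _ n 0) // big_mkcondr.
rewrite exchange_big_nat; apply: eq_big_nat => j /andP[_ ja].
rewrite [RHS](@big_nat_widen _ _ _ 0 j.+1 a) //.
by rewrite big_mkcondr; apply: eq_bigr => n _; rewrite ltnS.
Qed.

Lemma e_aux_fuel (g : nat -> R) n k : forall i f, (i <= n)%N -> (n - i <= k)%N ->
  ((n - i).+1 <= f)%N -> e_aux g n f i = e_coef g n i.
Proof.
rewrite /e_coef; elim: k => [|k IH] i f ilen nik nif.
  have -> : i = n by lia.
  by case: f nif => // f _; rewrite subnn /= eqxx.
case: f nif => // f nif /=.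
case: ifP => // /negbT ni; case: ifP => // _.
congr (_ + _); apply: eq_big_nat => j /andP[ij jn].
rewrite (IH j f) ?(IH j (n - i)%N) //; lia.
Qed.

Lemma e_coef_nn (g : nat -> R) n : e_coef g n n = 1.
Proof. by rewrite /e_coef subnn /= eqxx. Qed.

Lemma e_aux_S (g : nat -> R) n f i : e_aux g n f.+1 i =
  if i == n then 1 else if i == n.-1 then g 1%N
  else \sum_(i.+1 <= j < n) e_aux g n f j * g (j - i)%N + g (n - i)%N.
Proof. by []. Qed.

Lemma e_right (g : nat -> R) n i : (i < n)%N ->
  e_coef g n i = \sum_(i.+1 <= j < n.+1) e_coef g n j * g (j - i)%N.
Proof.
move=> ilt; rewrite big_nat_recr /=; last by lia.
rewrite e_coef_nn mul1r {1}/e_coef.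
have -> : (n - i).+1 = (n - i).-1.+2 by lia.
rewrite e_aux_S (_ : (i == n) = false); last by apply/eqP; lia.
case: ifP => [/eqP ->|/negbT ni1].
  rewrite big_geq; last by lia.
  by rewrite add0r; congr g; lia.
congr (_ + _); apply: eq_big_nat => j /andP[ij jn].
rewrite (@e_aux_fuel g n (n - j)%N j) //; lia.
Qed.

Lemma e_trans (g : nat -> R) k : forall n i, (i <= n)%N -> (n - i <= k)%N ->
  e_coef g n i = e_coef g (n - i) 0.
Proof.
elim: k => [|k IH] n i ilen nik.
  have -> : i = n by lia.
  by rewrite subnn !e_coef_nn.
have [->|ilt] := eqVneq i n; first by rewrite subnn !e_coef_nn.
have ilt' : (i < n)%N by lia.
rewrite e_right // (@e_right g (n - i)%N 0%N); last by lia.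
rewrite -(add1n i) big_addn.
have -> : (n.+1 - i = (n - i).+1)%N by lia.
apply: eq_big_nat => j /andP[j1 jn].
rewrite (IH n (j + i)%N); try lia.
rewrite (IH (n - i)%N j); try lia.
by congr (e_coef g _ _ * g _); lia.
Qed.

Lemma e_left (g : nat -> R) n i : (i < n)%N ->
  e_coef g n i = \sum_(1 <= d < (n - i).+1) g d * e_coef g (n - d)%N i.
Proof.
move=> ilt.
rewrite (@e_trans g (n - i)%N n i) //; last by lia.
rewrite e_right; last by lia.
rewrite -(add1n 0) big_addn subn0.
apply: eq_big_nat => d /andP[_ dn].
rewrite addn0 mulrC subn0 (@e_trans g (n - i - d)%N (n - i)%N d); try lia.
rewrite (@e_trans g (n - d - i)%N (n - d)%N i); try lia.
by congr (_ * e_coef g _ _); lia.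
Qed.

Lemma e_solve (g y q : nat -> R) a :
  (forall j, (j < a)%N -> y j = \sum_(1 <= i < j.+1) g i * y (j - i)%N + q j) ->
  forall j, (j < a)%N -> y j = \sum_(0 <= n < j.+1) e_coef g j n * q n.
Proof.
move=> Hy j ja.
suff H : forall k j, (j <= k)%N -> (j < a)%N ->
    y j = \sum_(0 <= n < j.+1) e_coef g j n * q n by exact: (H j j).
elim=> [|k IH] {}j jk {}ja.
  move: ja; have -> : j = 0%N by lia.
  by move=> ja; rewrite Hy // big_geq // add0r big_nat1 e_coef_nn mul1r.
rewrite Hy //.
have E1 : \sum_(1 <= i < j.+1) g i * y (j - i)%N =
    \sum_(1 <= i < j.+1) \sum_(0 <= n < (j - i).+1)
       g i * e_coef g (j - i) n * q n.
  apply: eq_big_nat => i /andP[i1 ij].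
  rewrite (IH (j - i)%N); try lia.
  by rewrite mulr_sumr; apply: eq_bigr => n _; rewrite mulrA.
rewrite E1 tri1 big_nat_recr //= e_coef_nn mul1r; congr (_ + _).
apply: eq_big_nat => n /andP[_ nj].
rewrite (e_left g nj) mulr_suml; apply: eq_bigr => d _.
by [].
Qed.

End G3.

Set Implicit Arguments. Unset Strict Implicit. Unset Printing Implicit Defensive.

Section G4.
Variable R : realType.
Local Open Scope ereal_scope.

Lemma term_le_eser (f : nat -> \bar R) m k : (forall i, (m <= i)%N -> 0 <= f i) ->
  (m <= k)%N -> f k <= \sum_(m <= i <oo) f i.
Proof.
move=> f0 mk; apply: le_trans (nneseries_lim_ge (P := xpredT) k.+1 _); last first.
  by move=> n mn _; exact: f0.
rewrite big_nat_recr //= leeDr //; rewrite big_nat_cond; apply: sume_ge0.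
by move=> i /andP[/andP[mi _] _]; exact: f0.
Qed.

Lemma term_le_sum (F : nat -> \bar R) m n k : (forall i, (m <= i < n)%N -> 0 <= F i) ->
  (m <= k < n)%N -> F k <= \sum_(m <= i < n) F i.
Proof.
move=> F0 /andP[mk kn].
rewrite (@big_cat_nat _ _ _ k) //=; last exact: ltnW.
rewrite (big_ltn kn).
apply: (@le_trans _ _ (F k + \sum_(k.+1 <= i < n) F i)).
  apply: leeDl; rewrite big_nat_cond; apply: sume_ge0 => i /andP[/andP[ki ik] _].
  by apply: F0; rewrite ik (leq_trans _ ki) // (leq_trans mk).
apply: leeDr; rewrite big_nat_cond; apply: sume_ge0 => i /andP[/andP[mi ik] _].
by apply: F0; rewrite mi (ltn_trans ik).
Qed.

Lemma mean_ge1 (s : nat -> R) : s 0%N = 0%R -> (forall n, (0 <= s n)%R) ->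
  esum_from 0 s = 1 -> emean s < +oo -> (1 <= fine (emean s))%R.
Proof.
move=> s0 sge0 s1 sm.
have : esum_from 0 s <= emean s.
  apply: lee_nneseries => [i _ _|n _]; first by rewrite lee_fin.
  rewrite lee_fin; case: n => [|n]; first by rewrite s0 mulr0.
  by rewrite ler_peMl // ler1n.
rewrite s1 => H; rewrite -lee_fin fineK //.
by rewrite ge0_fin_numE //; apply: le_trans H.
Qed.

Lemma exists_pos (s : nat -> R) : s 0%N = 0%R -> (forall n, (0 <= s n)%R) ->
  esum_from 0 s = 1 -> exists u, (1 <= u)%N /\ (0 < s u)%R.
Proof.
move=> s0 sge0 s1; apply/not_existsP => H.
have : esum_from 0 s = 0.
  rewrite /esum_from eseries0 // => i _ _.
  case: i => [|i]; first by rewrite s0.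
  have := H i.+1; case: (ltgtP (s i.+1) 0%R) => //.
  - by move=> /lt_le_trans /(_ (sge0 i.+1)); rewrite ltxx.
  - by move=> sp; case; split.
  - by move=> ->.
by rewrite s1 => /eqP; rewrite onee_eq0.
Qed.

End G4.

Set Implicit Arguments. Unset Strict Implicit. Unset Printing Implicit Defensive.

Section MD.
Variable R : realType.
Definition PPf (a b : nat) (lam : R) (g : nat -> R) (p : nat -> nat -> nat -> R) k :=
  \sum_(a <= m < b.+1) ((1 - lam) * p k m 1%N
     + lam * \sum_(1 <= i < k.+1) g i * p (k - i)%N m 1%N).
Definition QQf (lam : R) (g : nat -> R) (Q : nat -> nat -> R) k :=
  (1 - lam) * Q k 1%N + lam * \sum_(1 <= i < k.+1) g i * Q (k - i)%N 1%N.
Definition P0f (a : nat) (lam delta : R) (g p0 : nat -> R) k :=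
  (1 - delta) * lam * \sum_(0 <= i < a) g (k - i)%N * p0 i.
Definition Injf a b lam delta g p0 p Q k :=
  PPf a b lam g p k + QQf lam g Q k + P0f a lam delta g p0 k.
End MD.

Set Implicit Arguments. Unset Strict Implicit. Unset Printing Implicit Defensive.

Section M1.
Variable R : realType.

Lemma Inj_ge0 (a b : nat) (lam delta : R) (g p0 : nat -> R)
  (p : nat -> nat -> nat -> R) (Q : nat -> nat -> R) k :
  0 <= lam <= 1 -> delta <= 1 -> (forall m, 0 <= g m) ->
  (forall n, (n < a)%N -> 0 <= p0 n) ->
  (forall n r u, (a <= r <= b)%N -> (1 <= u)%N -> 0 <= p n r u) ->
  (forall n u, (1 <= u)%N -> 0 <= Q n u) ->
  [/\ 0 <= PPf a b lam g p k, 0 <= QQf lam g Q k, 0 <= P0f a lam delta g p0 k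
    & 0 <= Injf a b lam delta g p0 p Q k].
Proof.
move=> /andP[l0 l1] d1 gge0 p00 pge0 Qge0.
have l1' : 0 <= 1 - lam by rewrite subr_ge0.
have PP0 : 0 <= PPf a b lam g p k.
  rewrite /PPf big_nat_cond; apply: sumr_ge0 => m /andP[/andP[am mb] _].
  have mr : (a <= m <= b)%N by rewrite am -ltnS mb.
  apply: addr_ge0; first by rewrite mulr_ge0 // pge0.
  by rewrite mulr_ge0 // sumr_ge0 // => i _; rewrite mulr_ge0 // pge0.
have QQ0 : 0 <= QQf lam g Q k.
  rewrite /QQf; apply: addr_ge0; first by rewrite mulr_ge0 // Qge0.
  by rewrite mulr_ge0 // sumr_ge0 // => i _; rewrite mulr_ge0 // Qge0.
have P00 : 0 <= P0f a lam delta g p0 k.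
  rewrite /P0f !mulr_ge0 ?subr_ge0 //.
  rewrite big_nat_cond sumr_ge0 // => i /andP[/andP[_ ia] _].
  by rewrite mulr_ge0 // p00.
have I0 : 0 <= Injf a b lam delta g p0 p Q k.
  by rewrite /Injf; apply: addr_ge0 => //; apply: addr_ge0.
by split.
Qed.


Lemma busy (a b : nat) (lam delta : R) (g : nat -> R) (s : nat -> nat -> R)
  (p0 : nat -> R) (p : nat -> nat -> nat -> R) (Q : nat -> nat -> R) r :
  (1 <= a)%N -> (a <= b)%N -> 0 < lam -> lam < 1 -> 0 <= delta <= 1 ->
  g 0%N = 0 -> (forall m, 0 <= g m) -> esum_from 0 g = 1%E ->
  s r 0%N = 0 -> (forall n, 0 <= s r n) -> esum_from 0 (s r) = 1%E ->
  (emean (s r) < +oo)%E ->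
  (forall n, (n < a)%N -> 0 <= p0 n) ->
  (forall n r u, (a <= r <= b)%N -> (1 <= u)%N -> 0 <= p n r u) ->
  (forall n u, (1 <= u)%N -> 0 <= Q n u) ->
  (forall r u, (a <= r <= b)%N -> (1 <= u)%N ->
     p 0%N r u = (1 - lam) * p 0%N r u.+1
       + s r u * (\sum_(a <= m < b.+1)
                     ((1 - lam) * p r m 1%N
                      + lam * \sum_(1 <= i < r.+1) g i * p (r - i)%N m 1%N)
                  + (1 - lam) * Q r 1%N
                  + lam * \sum_(1 <= i < r.+1) g i * Q (r - i)%N 1%N
                  + (1 - delta) * lam * \sum_(0 <= i < a) g (r - i)%N * p0 i)) ->
  (forall n r u, (1 <= n)%N -> (a <= r <= b - 1)%N -> (1 <= u)%N ->
     p n r u = (1 - lam) * p n r u.+1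
       + lam * \sum_(1 <= i < n.+1) g i * p (n - i)%N r u.+1) ->
  (forall n u, (1 <= n)%N -> (1 <= u)%N ->
     p n b u = (1 - lam) * p n b u.+1
       + lam * \sum_(1 <= i < n.+1) g i * p (n - i)%N b u.+1
       + s b u * (\sum_(a <= m < b.+1)
                     ((1 - lam) * p (n + b)%N m 1%N
                      + lam * \sum_(1 <= i < (n + b).+1)
                                 g i * p (n + b - i)%N m 1%N)
                  + (1 - lam) * Q (n + b)%N 1%N
                  + lam * \sum_(1 <= i < (n + b).+1) g i * Q (n + b - i)%N 1%N
                  + (1 - delta) * lam
                      * \sum_(0 <= i < a) g (n + b - i)%N * p0 i)) ->
  (\sum_(0 <= n <oo) \sum_(a <= r < b.+1) \sum_(1 <= u <oo) (p n r u)%:E < +oo)%E ->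
  (a <= r <= b)%N ->
  let Ae := (if (r < b)%N then (Injf a b lam delta g p0 p Q r)%:E
             else esum_from 0 (fun n => Injf a b lam delta g p0 p Q (n + b)))%E in
  [/\ Ae \is a fin_num, (0 <= fine Ae),
   fine (esum_from 0 (fun n => p n r 1%N)) = fine Ae,
   (forall u, (1 <= u)%N -> esum_from 0 (fun n => p n r u) \is a fin_num) &
   esum_from 1 (fun u => fine (esum_from 0 (fun n => p n r u)))
     = (fine Ae * fine (emean (s r)))%:E].
Proof.
move=> a1 ab lam0 lam1 /andP[d0 d1] g0 gge0 g1 s0 sge0 s1 smean p00 pge0 Qge0
  E3 E4 E5 BT rab Ae.
pose Inj := Injf a b lam delta g p0 p Q.
have Inj0 k : 0 <= Inj k.
  have lamI : 0 <= lam <= 1 by rewrite !ltW.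
  by have [] := @Inj_ge0 a b lam delta g p0 p Q k lamI d1 gge0 p00 pge0 Qge0.
have pr0 n u : (1 <= u)%N -> 0 <= p n r u by move=> u1; apply: pge0.
have sumu0 n r' : (a <= r' <= b)%N -> (0 <= \sum_(1 <= u <oo) (p n r' u)%:E)%E.
  by move=> hr; apply: nneseries_ge0 => u u1 _; rewrite lee_fin pge0.
have le_BT (h : nat -> \bar R) : (forall n, 0 <= h n)%E ->
   (forall n, h n <= \sum_(a <= r' < b.+1) \sum_(1 <= u <oo) (p n r' u)%:E)%E ->
   (\sum_(0 <= n <oo) h n < +oo)%E.
  move=> h0 hle; apply: le_lt_trans BT; apply: lee_nneseries => // n _ _.
have inner_le n : (\sum_(1 <= u <oo) (p n r u)%:E <=
    \sum_(a <= r' < b.+1) \sum_(1 <= u <oo) (p n r' u)%:E)%E.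
  apply: (@term_le_sum _ (fun r' => \sum_(1 <= u <oo) (p n r' u)%:E)%E).
    by move=> i /andP[ai ib]; apply: sumu0; rewrite ai -ltnS.
  by case/andP: rab => ar rb; rewrite ar ltnS.
have fin1 u : (1 <= u)%N -> esum_from 0 (fun n => p n r u) \is a fin_num.
  move=> u1; rewrite ge0_fin_numE; last by apply: esum_ge0 => n _; apply: pr0.
  apply: le_BT => [n|n]; first by rewrite lee_fin pr0.
  apply: le_trans (inner_le n).
  by apply: (@term_le_eser _ (fun u => (p n r u)%:E)) => // i i1; rewrite lee_fin pge0.
pose P u := fine (esum_from 0 (fun n => p n r u)).
have PE u : (1 <= u)%N -> (P u)%:E = esum_from 0 (fun n => p n r u).
  by move=> u1; rewrite fineK // fin1.
have finS : (esum_from 1 P < +oo)%E.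
  rewrite /esum_from (eq_eseries_from (h := fun u => esum_from 0 (fun n => p n r u)));
    last by move=> u u1; rewrite PE.
  rewrite /esum_from -inter_from; last by move=> i j j1; rewrite lee_fin pr0.
  apply: le_BT => [n|n]; last exact: inner_le.
  by apply: nneseries_ge0 => u u1 _; rewrite lee_fin pr0.
have Ae0 : (0 <= Ae)%E.
  rewrite /Ae; case: ifPn => _; first by rewrite lee_fin.
  by apply: esum_ge0 => n _.
have bal u : (1 <= u)%N ->
    esum_from 0 (fun n => p n r u) = (esum_from 0 (fun n => p n r u.+1)
                                     + (s r u)%:E * Ae)%E.
  move=> u1.
  pose W n := (1 - lam) * p n r u.+1 + lam * \sum_(1 <= i < n.+1) g i * p (n - i)%N r u.+1.
  pose Ib n := if (r < b)%N then (if n == 0%N then Inj r else 0) else Inj (n + b)%N.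
  have Ib0 n : 0 <= Ib n by rewrite /Ib; case: ifP => _ //; case: ifP.
  have W0 n : 0 <= W n.
    rewrite /W; apply: addr_ge0; first by rewrite mulr_ge0 ?subr_ge0 ?pr0 // ltW.
    apply: mulr_ge0; first exact: ltW.
    by apply: sumr_ge0 => i _; rewrite mulr_ge0 // pr0.
  have pn n : p n r u = W n + s r u * Ib n.
    rewrite /W /Ib; case: n => [|n].
      rewrite E3 // (big_geq (leqnn 1%N)) mulr0 addr0 /Inj /Injf /PPf /QQf /P0f.
      case: ifPn => rb; first by rewrite !addrA.
      have -> : r = b by case/andP: rab => _ rb'; apply/eqP; rewrite eqn_leq rb' leqNgt rb.
      by rewrite add0n !addrA.
    case: ifPn => rb.
      rewrite E4 // ?mulr0 ?addr0 //.
      by apply/andP; split; [case/andP: rab | lia].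
    have rbE : r = b by case/andP: rab => _ rb'; apply/eqP; rewrite eqn_leq rb' leqNgt rb.
    rewrite rbE E5 // /Inj /Injf /PPf /QQf /P0f.
    by rewrite !addrA.
  have balW : esum_from 0 W = esum_from 0 (fun n => p n r u.+1).
    apply: bal_esum => //; first by rewrite !ltW.
    - by move=> n; apply: pr0.
    - by rewrite ltey_eq fin1.
  rewrite /esum_from (eq_eseriesr (g := fun n => ((W n)%:E + (s r u * Ib n)%:E)%E));
    last by move=> n _; rewrite pn EFinD.
  rewrite nneseriesD; last 2 first.
  - by move=> n _ _; rewrite lee_fin.
  - by move=> n _ _; rewrite lee_fin mulr_ge0.
  rewrite -/(esum_from 0 W) balW; congr (_ + _)%E.
  have := esum_Zl 0 (s r u) Ib0; rewrite /esum_from => ->.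
  congr (_ * _)%E; rewrite /Ae /Ib; case: ifPn => rb.
    rewrite -/(esum_from 0 _) esum_S; last by move=> n _; case: ifP.
    rewrite /= /esum_from eseries0 ?adde0 // => n n1 _.
    by case: n n1.
  by [].
have [u0 [u01 su0]] := exists_pos s0 sge0 s1.
have Aefin : Ae \is a fin_num.
  have H : ((s r u0)%:E * Ae < +oo)%E.
    apply: (@le_lt_trans _ _ (esum_from 0 (fun n => p n r u0))); last by rewrite ltey_eq fin1.
    by rewrite bal // leeDr //; apply: esum_ge0 => n _; apply: pr0.
  rewrite (ge0_fin_numE Ae0) ltNge leye_eq; apply/negP => /eqP AeE.
  by move: H; rewrite AeE gt0_muley ?lte_fin // ltxx.
pose A := fine Ae.
have A0 : 0 <= A by rewrite /A fine_ge0.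
have Prec u : (1 <= u)%N -> P u = P u.+1 + s r u * A.
  move=> u1; apply: EFin_inj; rewrite EFinD EFinM PE // PE // fineK //.
  exact: bal.
have P0 u : (1 <= u)%N -> 0 <= P u.
  by move=> u1; apply: fine_ge0; apply: esum_ge0 => n _; apply: pr0.
have [HP1 HPs] := renewal s0 sge0 s1 smean A0 P0 finS Prec.
by split.
Qed.

End M1.

Set Implicit Arguments. Unset Strict Implicit. Unset Printing Implicit Defensive.

Section M2.
Variable R : realType.

Definition KVf (a b : nat) (lam delta : R) (g : nat -> R)
  (p : nat -> nat -> nat -> R) (Q : nat -> nat -> R) n :=
  (1 - lam) * (\sum_(a <= m < b.+1) p n m 1%N + delta * Q n 1%N)
  + lam * \sum_(1 <= i < n.+1)
            g i * (\sum_(a <= m < b.+1) p (n - i)%N m 1%N + delta * Q (n - i)%N 1%N).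

Lemma vac (a b : nat) (lam delta : R) (g v : nat -> R)
  (p : nat -> nat -> nat -> R) (Q : nat -> nat -> R) :
  (1 <= a)%N -> 0 < lam -> lam < 1 -> 0 <= delta ->
  g 0%N = 0 -> (forall m, 0 <= g m) -> esum_from 0 g = 1%E ->
  v 0%N = 0 -> (forall n, 0 <= v n) -> esum_from 0 v = 1%E ->
  (emean v < +oo)%E ->
  (forall n r u, (a <= r <= b)%N -> (1 <= u)%N -> 0 <= p n r u) ->
  (forall n u, (1 <= u)%N -> 0 <= Q n u) ->
  (forall u, (1 <= u)%N ->
     Q 0%N u = (1 - lam) * Q 0%N u.+1
       + (1 - lam) * (\sum_(a <= m < b.+1) p 0%N m 1%N + delta * Q 0%N 1%N)
         * v u) ->
  (forall n u, (1 <= n <= a - 1)%N -> (1 <= u)%N ->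
     Q n u = (1 - lam) * Q n u.+1
       + lam * \sum_(1 <= i < n.+1) g i * Q (n - i)%N u.+1
       + v u * ((1 - lam) * (\sum_(a <= m < b.+1) p n m 1%N + delta * Q n 1%N)
                + lam * \sum_(1 <= i < n.+1)
                          g i * (\sum_(a <= m < b.+1) p (n - i)%N m 1%N
                                 + delta * Q (n - i)%N 1%N))) ->
  (forall n u, (a <= n)%N -> (1 <= u)%N ->
     Q n u = (1 - lam) * Q n u.+1
       + lam * \sum_(1 <= i < n.+1) g i * Q (n - i)%N u.+1) ->
  (\sum_(0 <= n <oo) \sum_(1 <= u <oo) (Q n u)%:E < +oo)%E ->
  let B := \sum_(0 <= n < a) KVf a b lam delta g p Q n in
  [/\ 0 <= B,
   (forall u, (1 <= u)%N -> esum_from 0 (fun n => Q n u) \is a fin_num),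
   fine (esum_from 0 (fun n => Q n 1%N)) = B &
   esum_from 1 (fun u => fine (esum_from 0 (fun n => Q n u)))
     = (B * fine (emean v))%:E].
Proof.
move=> a1 lam0 lam1 d0 g0 gge0 g1 v0 vge0 v1 vmean pge0 Qge0 E6 E7 E8 VT B.
have Qr0 n u : (1 <= u)%N -> 0 <= Q n u by move=> u1; apply: Qge0.
have KV0 n : 0 <= KVf a b lam delta g p Q n.
  have S0 k : 0 <= \sum_(a <= m < b.+1) p k m 1%N + delta * Q k 1%N.
    apply: addr_ge0; last by rewrite mulr_ge0 // Qge0.
    rewrite big_nat_cond; apply: sumr_ge0 => m /andP[/andP[am mb] _].
    by apply: pge0 => //; rewrite am -ltnS.
  rewrite /KVf; apply: addr_ge0; first by rewrite mulr_ge0 // subr_ge0 ltW.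
  apply: mulr_ge0; first exact: ltW.
  by apply: sumr_ge0 => i _; rewrite mulr_ge0.
have B0 : 0 <= B by apply: sumr_ge0.
have le_VT (h : nat -> \bar R) : (forall n, 0 <= h n)%E ->
   (forall n, h n <= \sum_(1 <= u <oo) (Q n u)%:E)%E ->
   (\sum_(0 <= n <oo) h n < +oo)%E.
  by move=> h0 hle; apply: le_lt_trans VT; apply: lee_nneseries => // n _ _.
have fin1 u : (1 <= u)%N -> esum_from 0 (fun n => Q n u) \is a fin_num.
  move=> u1; rewrite ge0_fin_numE; last by apply: esum_ge0 => n _; apply: Qr0.
  apply: le_VT => [n|n]; first by rewrite lee_fin Qr0.
  by apply: (@term_le_eser _ (fun u => (Q n u)%:E)) => // i i1; rewrite lee_fin Qge0.
pose P u := fine (esum_from 0 (fun n => Q n u)).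
have PE u : (1 <= u)%N -> (P u)%:E = esum_from 0 (fun n => Q n u).
  by move=> u1; rewrite fineK // fin1.
have finS : (esum_from 1 P < +oo)%E.
  rewrite /esum_from (eq_eseries_from (h := fun u => esum_from 0 (fun n => Q n u)));
    last by move=> u u1; rewrite PE.
  rewrite /esum_from -inter_from; last by move=> i j j1; rewrite lee_fin Qr0.
  by apply: le_VT => [n|n] //; apply: nneseries_ge0 => u u1 _; rewrite lee_fin Qr0.
have bal u : (1 <= u)%N -> P u = P u.+1 + v u * B.
  move=> u1.
  pose W n := (1 - lam) * Q n u.+1 + lam * \sum_(1 <= i < n.+1) g i * Q (n - i)%N u.+1.
  pose Ib n := if (n < a)%N then KVf a b lam delta g p Q n else 0.
  have Ib0 n : 0 <= Ib n by rewrite /Ib; case: ifP.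
  have W0 n : 0 <= W n.
    rewrite /W; apply: addr_ge0; first by rewrite mulr_ge0 ?subr_ge0 ?Qr0 // ltW.
    apply: mulr_ge0; first exact: ltW.
    by apply: sumr_ge0 => i _; rewrite mulr_ge0 // Qr0.
  have pn n : Q n u = W n + v u * Ib n.
    rewrite /W /Ib /KVf; case: n => [|n].
      by rewrite E6 // a1 !(big_geq (leqnn 1%N)) !mulr0 !addr0; ring.
    case: ifPn => na.
      by rewrite E7 //; apply/andP; split => //; lia.
    by rewrite E8 ?mulr0 ?addr0 //; lia.
  have balW : esum_from 0 W = esum_from 0 (fun n => Q n u.+1).
    apply: bal_esum => //; first by rewrite !ltW.
    - by move=> n; apply: Qr0.
    - by rewrite ltey_eq fin1.
  apply: EFin_inj; rewrite EFinD EFinM PE // PE //.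
  rewrite /esum_from (eq_eseriesr (g := fun n => ((W n)%:E + (v u * Ib n)%:E)%E));
    last by move=> n _; rewrite pn EFinD.
  rewrite nneseriesD; last 2 first.
  - by move=> n _ _; rewrite lee_fin.
  - by move=> n _ _; rewrite lee_fin mulr_ge0.
  rewrite -/(esum_from 0 W) balW; congr (_ + _)%E.
  have := esum_Zl 0 (v u) Ib0; rewrite /esum_from => ->.
  congr (_ * _)%E.
  rewrite (@eser_fin _ _ 0 a) //; last by move=> i ai; rewrite /Ib ltnNge ai.
  rewrite sumEFin; congr (_%:E); apply: eq_big_nat => n /andP[_ na].
  by rewrite /Ib na.
have P0 u : (1 <= u)%N -> 0 <= P u.
  by move=> u1; apply: fine_ge0; apply: esum_ge0 => n _; apply: Qr0.
have [HP1 HPs] := renewal v0 vge0 v1 vmean B0 P0 finS bal.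
by split.
Qed.

End M2.

Set Implicit Arguments. Unset Strict Implicit. Unset Printing Implicit Defensive.

Section M3.
Variable R : realType.

Lemma K1 (a b : nat) (c : R) (g G sm p0 : nat -> R) : (a <= b)%N ->
  \sum_(a <= r < b) (c * \sum_(0 <= i < a) g (r - i)%N * p0 i) * sm r
  + c * \sum_(0 <= i < a) p0 i * (g (b - i)%N + G (b.+1 - i)%N) * sm b
  = c * \sum_(0 <= i < a) p0 i *
      (\sum_(a <= r < b.+1) g (r - i)%N * sm r + sm b * G (b.+1 - i)%N).
Proof.
move=> ab.
have E1 : \sum_(a <= r < b) (c * \sum_(0 <= i < a) g (r - i)%N * p0 i) * sm r
   = \sum_(0 <= i < a) c * (p0 i * \sum_(a <= r < b) g (r - i)%N * sm r).
  transitivity (\sum_(a <= r < b) \sum_(0 <= i < a) c * (p0 i * (g (r - i)%N * sm r))).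
    apply: eq_bigr => r _; rewrite mulr_sumr mulr_suml; apply: eq_bigr => i _; ring.
  rewrite exchange_big_nat; apply: eq_bigr => i _.
  by rewrite !mulr_sumr.
rewrite E1 !mulr_sumr -big_split /=; apply: eq_bigr => i _.
rewrite big_nat_recr //=; ring.
Qed.

Lemma final_identity (a b : nat) (lam delta tau EV Z B : R)
  (g G sm PP QQ p0 Ar : nat -> R) :
  (delta = 0 \/ delta = 1) -> tau != 0 -> (a <= b)%N ->
  (forall r, (a <= r < b)%N ->
     Ar r = PP r + QQ r + (1 - delta) * lam * \sum_(0 <= i < a) g (r - i)%N * p0 i) ->
  Ar b = PP b + QQ b + Z
         + (1 - delta) * lam * \sum_(0 <= i < a) p0 i * (g (b - i)%N + G (b.+1 - i)%N) ->
  B = \sum_(0 <= n < a) (PP n + delta * QQ n) ->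
  (delta = 0 -> forall j, (j < a)%N ->
     lam * p0 j = \sum_(0 <= n < j.+1) e_coef g j n * QQ n) ->
  tau * (\sum_(0 <= n < a)
           ((tau^-1 * PP n) * EV + delta * (tau^-1 * QQ n) * EV
            + ((1 - delta) * (tau^-1 * QQ n)) *
              \sum_(n <= j < a) (e_coef g j n *
                 (\sum_(a <= i < b.+1) g (i - j)%N * sm i + sm b * G (b.+1 - j)%N)))
         + \sum_(a <= n < b.+1) (tau^-1 * PP n + tau^-1 * QQ n) * sm n
         + tau^-1 * sm b * Z)
  = \sum_(a <= r < b.+1) Ar r * sm r + B * EV.
Proof.
move=> hd tau0 ab Ar_lt Ar_b BE p0E.
pose F j := \sum_(a <= i < b.+1) g (i - j)%N * sm i + sm b * G (b.+1 - j)%N.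
pose H n := \sum_(n <= j < a) e_coef g j n * F j.
have -> : \sum_(0 <= n < a)
           ((tau^-1 * PP n) * EV + delta * (tau^-1 * QQ n) * EV
            + ((1 - delta) * (tau^-1 * QQ n)) *
              \sum_(n <= j < a) (e_coef g j n *
                 (\sum_(a <= i < b.+1) g (i - j)%N * sm i + sm b * G (b.+1 - j)%N)))
     = tau^-1 * (B * EV + (1 - delta) * \sum_(0 <= n < a) QQ n * H n).
  rewrite BE mulr_suml mulr_sumr mulrDr mulr_sumr mulr_sumr -big_split /=.
  by apply: eq_bigr => n _; rewrite /H /F; ring.
have -> : \sum_(a <= n < b.+1) (tau^-1 * PP n + tau^-1 * QQ n) * sm n
     = tau^-1 * \sum_(a <= n < b.+1) (PP n + QQ n) * sm n.
  by rewrite mulr_sumr; apply: eq_bigr => n _; ring.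
have KEY : \sum_(a <= r < b) ((1 - delta) * lam * \sum_(0 <= i < a) g (r - i)%N * p0 i) * sm r
   + (1 - delta) * lam * \sum_(0 <= i < a) p0 i * (g (b - i)%N + G (b.+1 - i)%N) * sm b
   = (1 - delta) * \sum_(0 <= n < a) QQ n * H n.
  rewrite K1 //.
  have -> : \sum_(0 <= n < a) QQ n * H n = \sum_(0 <= j < a) F j * \sum_(0 <= n < j.+1) e_coef g j n * QQ n.
    rewrite /H (eq_bigr (fun n => \sum_(n <= j < a) QQ n * (e_coef g j n * F j))); last first.
      by move=> n _; rewrite mulr_sumr.
    rewrite tri2; apply: eq_bigr => j _; rewrite mulr_sumr; apply: eq_bigr => n _; ring.
  case: hd => hd; last by rewrite hd subrr !mul0r.
  rewrite hd subr0 !mul1r mulr_sumr; apply: eq_big_nat => j /andP[_ ja].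
  by rewrite -(p0E hd j ja) /F; ring.
rewrite [X in _ = X + _](@big_nat_recr _ _ _ b a) //= Ar_b.
rewrite (@eq_big_nat _ _ _ a b (fun r => Ar r * sm r) (fun r => (PP r + QQ r) * sm r
   + ((1 - delta) * lam * \sum_(0 <= i < a) g (r - i)%N * p0 i) * sm r)); last first.
  by move=> r hr; rewrite Ar_lt // mulrDl.
rewrite big_split /= [in LHS](@big_nat_recr _ _ _ b a) //=.
have tt : tau * tau^-1 = 1 by rewrite mulfV.
have T0E : ((1 - delta) * lam * \sum_(0 <= i < a) p0 i * (g (b - i)%N + G (b.+1 - i)%N)) * sm b
   = (1 - delta) * lam * \sum_(0 <= i < a) p0 i * (g (b - i)%N + G (b.+1 - i)%N) * sm b.
  by rewrite -mulrA mulr_suml.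
rewrite (mulrDl (PP b + QQ b + Z)) T0E.
move: KEY.
set S1 := \sum_(a <= i < b) _; set S2 := \sum_(a <= i < b) _.
set S3 := \sum_(0 <= i < a) (p0 i * _ * _).
set S4 := \sum_(0 <= n < a) QQ n * H n.
move=> KEY.
rewrite !mulrDr !mulrA tt !mul1r.
rewrite -[_ * S4]KEY; ring.
Qed.

End M3.

Set Implicit Arguments. Unset Strict Implicit. Unset Printing Implicit Defensive.

Section M4.
Variable R : realType.

Lemma KV_PPQQ (a b : nat) (lam delta : R) (g : nat -> R)
  (p : nat -> nat -> nat -> R) (Q : nat -> nat -> R) n :
  KVf a b lam delta g p Q n = PPf a b lam g p n + delta * QQf lam g Q n.
Proof.
have PPE : PPf a b lam g p n = (1 - lam) * \sum_(a <= m < b.+1) p n m 1%N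
    + lam * \sum_(1 <= i < n.+1) g i * \sum_(a <= m < b.+1) p (n - i)%N m 1%N.
  rewrite /PPf big_split /= -!mulr_sumr; congr (_ + _ * _).
  by rewrite exchange_big_nat; apply: eq_bigr => i _; rewrite mulr_sumr.
have KVE : KVf a b lam delta g p Q n = (1 - lam) * (\sum_(a <= m < b.+1) p n m 1%N + delta * Q n 1%N)
    + lam * (\sum_(1 <= i < n.+1) g i * \sum_(a <= m < b.+1) p (n - i)%N m 1%N
             + delta * \sum_(1 <= i < n.+1) g i * Q (n - i)%N 1%N).
  rewrite /KVf; congr (_ + _ * _); rewrite mulr_sumr -big_split /=.
  by apply: eq_bigr => i _; ring.
rewrite PPE KVE /QQf; ring.
Qed.

Lemma p0_sol (a b : nat) (lam : R) (g p0 : nat -> R) (Q : nat -> nat -> R) :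
  p0 0%N = (1 - 0) * ((1 - lam) * p0 0%N + (1 - lam) * Q 0%N 1%N) ->
  (forall n, (1 <= n <= a - 1)%N ->
     p0 n = (1 - 0) * ((1 - lam) * p0 n
              + lam * \sum_(1 <= i < n.+1) g i * p0 (n - i)%N
              + (1 - lam) * Q n 1%N
              + lam * \sum_(1 <= i < n.+1) g i * Q (n - i)%N 1%N)) ->
  forall j, (j < a)%N ->
     lam * p0 j = \sum_(0 <= n < j.+1) e_coef g j n * QQf lam g Q n.
Proof.
move=> E1 E2; apply: e_solve => j ja.
have -> : \sum_(1 <= i < j.+1) g i * (lam * p0 (j - i)%N)
        = lam * \sum_(1 <= i < j.+1) g i * p0 (j - i)%N.
  by rewrite mulr_sumr; apply: eq_bigr => i _; ring.
rewrite /QQf.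
have -> : lam * p0 j = p0 j - (1 - lam) * p0 j by ring.
case: j ja => [|j] ja.
  rewrite {1}E1 !(big_geq (leqnn 1%N)); ring.
rewrite {1}E2; first ring.
apply/andP; split => //; lia.
Qed.

End M4.

Set Implicit Arguments. Unset Strict Implicit. Unset Printing Implicit Defensive.

Section M5.
Variable R : realType.

Lemma Ab_decomp (a b : nat) (lam delta : R) (g p0 : nat -> R)
  (p : nat -> nat -> nat -> R) (Q : nat -> nat -> R) :
  (a <= b)%N -> 0 <= lam <= 1 -> delta <= 1 -> (forall m, 0 <= g m) ->
  esum_from 0 g = 1%E ->
  (forall n, (n < a)%N -> 0 <= p0 n) ->
  (forall n r u, (a <= r <= b)%N -> (1 <= u)%N -> 0 <= p n r u) ->
  (forall n u, (1 <= u)%N -> 0 <= Q n u) ->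
  esum_from 0 (fun n => Injf a b lam delta g p0 p Q (n + b)%N) =
   ((PPf a b lam g p b + QQf lam g Q b)%R%:E
    + esum_from b.+1 (fun n => PPf a b lam g p n + QQf lam g Q n)%R
    + ((1 - delta) * lam * \sum_(0 <= i < a)
          p0 i * (g (b - i)%N + fine (esum_from (b.+1 - i) g)))%R%:E)%E.
Proof.
move=> ab lamI d1 gge0 g1 p00 pge0 Qge0.
have I0 k := @Inj_ge0 R a b lam delta g p0 p Q k lamI d1 gge0 p00 pge0 Qge0.
have PQ0 k : 0 <= PPf a b lam g p k + QQf lam g Q k.
  by have [? ? _ _] := I0 k; apply: addr_ge0.
have P00 k : 0 <= P0f a lam delta g p0 k by have [] := I0 k.
rewrite /esum_from; under eq_eseriesr do rewrite /Injf EFinD.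
rewrite nneseriesD; last 2 first.
- by move=> n _ _; rewrite lee_fin.
- by move=> n _ _; rewrite lee_fin.
congr (_ + _)%E.
  rewrite (@nneseries_addn R (fun n => (PPf a b lam g p n + QQf lam g Q n)%:E) b); last first.
    by move=> n; rewrite lee_fin.
  by rewrite -/(esum_from b _) esum_S.
rewrite /P0f.
have h0 n : 0 <= \sum_(0 <= i < a) g (n + b - i)%N * p0 i.
  by rewrite big_nat_cond sumr_ge0 // => i /andP[/andP[_ ia] _]; rewrite mulr_ge0 // p00.
have := esum_Zl 0 ((1 - delta) * lam) h0; rewrite /esum_from => ->.
rewrite [in RHS]EFinM; congr (_ * _)%E.
under eq_eseriesr do rewrite -sumEFin.
rewrite nneseries_sum_range; last first.
  by move=> i j /andP[_ ia]; rewrite lee_fin mulr_ge0 // p00.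
rewrite -sumEFin; apply: eq_big_nat => i /andP[_ ia].
have ib : (i <= b)%N by apply: leq_trans ab; apply: ltnW.
rewrite (eq_eseriesr (g := fun n => (g (n + (b - i))%N * p0 i)%:E)); last first.
  by move=> n _; rewrite addnBA.
have := @esum_Zr R 0 (fun n => g (n + (b - i))%N) (p0 i) (fun n => gge0 _).
rewrite /esum_from => ->.
rewrite (@nneseries_addn R (fun n => (g n)%:E) (b - i)%N); last by move=> n; rewrite lee_fin.
rewrite -/(esum_from (b - i) g) esum_S // subSn //.
rewrite [in RHS]EFinM [in RHS]EFinD fineK //.
by apply: esum_fin_le => //; rewrite g1 ltry.
Qed.

End M5.

Set Implicit Arguments. Unset Strict Implicit. Unset Printing Implicit Defensive.

Section M6.
Variable R : realType.

Lemma omega_eq (a b : nat) (lam delta tau EV : R) (g smean : nat -> R)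
  (p : nat -> nat -> nat -> R) (Q : nat -> nat -> R) :
  (forall m, 0 <= g m) -> esum_from 0 g = 1%E ->
  (forall n, 0 <= PPf a b lam g p n + QQf lam g Q n) ->
  esum_from b.+1 (fun n => PPf a b lam g p n + QQf lam g Q n) \is a fin_num ->
  omegaE a b lam delta tau EV g smean p Q =
  (\sum_(0 <= n < a)
       ((tau^-1 * PPf a b lam g p n) * EV + delta * (tau^-1 * QQf lam g Q n) * EV
        + ((1 - delta) * (tau^-1 * QQf lam g Q n)) *
          \sum_(n <= j < a) (e_coef g j n *
             (\sum_(a <= i < b.+1) g (i - j)%N * smean i
              + smean b * fine (esum_from (b.+1 - j) g))))
   + \sum_(a <= n < b.+1) (tau^-1 * PPf a b lam g p n + tau^-1 * QQf lam g Q n) * smean n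
   + tau^-1 * smean b * fine (esum_from b.+1 (fun n => PPf a b lam g p n + QQf lam g Q n)))%:E.
Proof.
move=> gge0 g1 PQ0 Zfin.
have ppE n : pplus a b lam tau g p n = tau^-1 * PPf a b lam g p n.
  by rewrite /pplus /pplus_r /PPf mulr_sumr.
have qpE n : Qplus lam tau g Q n = tau^-1 * QQf lam g Q n by [].
have EG j : esum_from (b.+1 - j) (fun i => g i * smean b) =
            (smean b * fine (esum_from (b.+1 - j) g))%:E.
  rewrite esum_Zr // EFinM fineK //; apply: esum_fin_le => //.
  by rewrite g1 ltry.
rewrite /omegaE; cbv zeta.
rewrite !EFinD; congr (_ + _ + _)%E.
- rewrite -sumEFin; apply: eq_bigr => n _.
  rewrite (eq_bigr (fun j => (e_coef g j n * (\sum_(a <= i < b.+1) g (i - j)%N * smean i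
              + smean b * fine (esum_from (b.+1 - j) g)))%:E)); last first.
    by move=> j _; rewrite EG -EFinD -EFinM.
  by rewrite sumEFin -EFinM -EFinD ppE qpE.
- by congr (_%:E); apply: eq_bigr => n _; rewrite ppE qpE.
- have -> : esum_from b.+1 (fun n => (pplus a b lam tau g p n + Qplus lam tau g Q n) * smean b)
     = esum_from b.+1 (fun n => (PPf a b lam g p n + QQf lam g Q n) * (tau^-1 * smean b)).
    by congr esum_from; apply/funext => n; rewrite ppE qpE; ring.
  rewrite esum_Zr // -(fineK Zfin) -EFinM.
  by congr (_%:E); ring.
Qed.

End M6.

Unset Implicit Arguments. Set Strict Implicit.

Lemma psum_nat_eq0 (R : realType) (F : nat -> R) m n :
  (forall i, (m <= i < n)%N -> 0 <= F i) -> \sum_(m <= i < n) F i = 0 ->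
  forall i, (m <= i < n)%N -> F i = 0.
Proof.
elim: n => [|n IH] F0 S0 i /andP[mi]; first by [].
rewrite ltnS => iln.
have mn : (m <= n)%N by apply: leq_trans iln.
have h1 : 0 <= \sum_(m <= i < n) F i.
  by rewrite big_nat_cond sumr_ge0 // => k /andP[/andP[mk kn] _]; apply: F0; rewrite mk ltnS ltnW.
have h2 : 0 <= F n by apply: F0; rewrite mn /=.
move: S0; rewrite big_nat_recr // => /eqP; rewrite paddr_eq0 //.
case/andP => /eqP S0 /eqP Fn.
move: iln; rewrite leq_eqVlt => /orP[/eqP -> //|ilt].
apply: IH => //; last by rewrite mi.
by move=> k /andP[mk kn]; apply: F0; rewrite mk ltnS ltnW.
Qed.
Theorem lemma2 (R : realType) (a b : nat) (lam delta : R)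
  (g : nat -> R) (s : nat -> nat -> R) (v : nat -> R)
  (p0 : nat -> R) (p : nat -> nat -> nat -> R) (Q : nat -> nat -> R) :
  (1 <= a)%N -> (a <= b)%N ->
  0 < lam -> lam < 1 ->
  (delta = 0 \/ delta = 1) ->
  (* group-size distribution *)
  g 0%N = 0 -> (forall m, 0 <= g m) -> esum_from 0 g = 1%E ->
  (emean g < +oo)%E ->
  (* service-time pmfs s_r(n), n >= 1 *)
  (forall r, (a <= r <= b)%N ->
     [/\ s r 0%N = 0, (forall n, 0 <= s r n), esum_from 0 (s r) = 1%E
       & (emean (s r) < +oo)%E]) ->
  (* vacation-time pmf *)
  v 0%N = 0 -> (forall n, 0 <= v n) -> esum_from 0 v = 1%E ->
  (emean v < +oo)%E ->
  (* stability rho = lam gbar / (b mu_b) < 1 *)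
  (let gbar := fine (emean g) in
   let mu_b := (fine (emean (s b)))^-1 in
   lam * gbar / (b%:R * mu_b) < 1) ->
  (* nonnegativity of the stationary probabilities *)
  (forall n, (n < a)%N -> 0 <= p0 n) ->
  (forall n r u, (a <= r <= b)%N -> (1 <= u)%N -> 0 <= p n r u) ->
  (forall n u, (1 <= u)%N -> 0 <= Q n u) ->
  (* (E1) *)
  p0 0%N = (1 - delta) * ((1 - lam) * p0 0%N + (1 - lam) * Q 0%N 1%N) ->
  (* (E2) *)
  (forall n, (1 <= n <= a - 1)%N ->
     p0 n = (1 - delta) * ((1 - lam) * p0 n
              + lam * \sum_(1 <= i < n.+1) g i * p0 (n - i)%N
              + (1 - lam) * Q n 1%N
              + lam * \sum_(1 <= i < n.+1) g i * Q (n - i)%N 1%N)) ->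
  (* (E3) *)
  (forall r u, (a <= r <= b)%N -> (1 <= u)%N ->
     p 0%N r u = (1 - lam) * p 0%N r u.+1
       + s r u * (\sum_(a <= m < b.+1)
                     ((1 - lam) * p r m 1%N
                      + lam * \sum_(1 <= i < r.+1) g i * p (r - i)%N m 1%N)
                  + (1 - lam) * Q r 1%N
                  + lam * \sum_(1 <= i < r.+1) g i * Q (r - i)%N 1%N
                  + (1 - delta) * lam * \sum_(0 <= i < a) g (r - i)%N * p0 i)) ->
  (* (E4) *)
  (forall n r u, (1 <= n)%N -> (a <= r <= b - 1)%N -> (1 <= u)%N ->
     p n r u = (1 - lam) * p n r u.+1
       + lam * \sum_(1 <= i < n.+1) g i * p (n - i)%N r u.+1) ->
  (* (E5) *)
  (forall n u, (1 <= n)%N -> (1 <= u)%N ->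
     p n b u = (1 - lam) * p n b u.+1
       + lam * \sum_(1 <= i < n.+1) g i * p (n - i)%N b u.+1
       + s b u * (\sum_(a <= m < b.+1)
                     ((1 - lam) * p (n + b)%N m 1%N
                      + lam * \sum_(1 <= i < (n + b).+1)
                                 g i * p (n + b - i)%N m 1%N)
                  + (1 - lam) * Q (n + b)%N 1%N
                  + lam * \sum_(1 <= i < (n + b).+1) g i * Q (n + b - i)%N 1%N
                  + (1 - delta) * lam
                      * \sum_(0 <= i < a) g (n + b - i)%N * p0 i)) ->
  (* (E6) *)
  (forall u, (1 <= u)%N ->
     Q 0%N u = (1 - lam) * Q 0%N u.+1
       + (1 - lam) * (\sum_(a <= m < b.+1) p 0%N m 1%N + delta * Q 0%N 1%N)
         * v u) ->
  (* (E7) *)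
  (forall n u, (1 <= n <= a - 1)%N -> (1 <= u)%N ->
     Q n u = (1 - lam) * Q n u.+1
       + lam * \sum_(1 <= i < n.+1) g i * Q (n - i)%N u.+1
       + v u * ((1 - lam) * (\sum_(a <= m < b.+1) p n m 1%N + delta * Q n 1%N)
                + lam * \sum_(1 <= i < n.+1)
                          g i * (\sum_(a <= m < b.+1) p (n - i)%N m 1%N
                                 + delta * Q (n - i)%N 1%N))) ->
  (* (E8) *)
  (forall n u, (a <= n)%N -> (1 <= u)%N ->
     Q n u = (1 - lam) * Q n u.+1
       + lam * \sum_(1 <= i < n.+1) g i * Q (n - i)%N u.+1) ->
  (* (N) *)
  (((1 - delta) * \sum_(0 <= n < a) p0 n)%:E
   + \sum_(0 <= n <oo) \sum_(a <= r < b.+1) \sum_(1 <= u <oo) (p n r u)%:E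
   + \sum_(0 <= n <oo) \sum_(1 <= u <oo) (Q n u)%:E = 1)%E ->
  (* conclusion *)
  let tau := fine (tauE a b p Q) in
  let EV := fine (emean v) in
  let smean := fun r => fine (emean (s r)) in
  tauE a b p Q
  = (((1 - (1 - delta) * \sum_(0 <= n < a) p0 n)%:E)
     / omegaE a b lam delta tau EV g smean p Q)%E.
Proof.
move=> a1 ab lam0 lam1 hdelta g0 gge0 g1 gmean sP v0 vge0 v1 vmean _ p00 pge0 Qge0
  E1 E2 E3 E4 E5 E6 E7 E8 HN tau EV smean.
have d0 : 0 <= delta by case: hdelta => ->.
have d1 : delta <= 1 by case: hdelta => ->.
have dI : 0 <= delta <= 1 by rewrite d0 d1.
have lamI : 0 <= lam <= 1 by rewrite !ltW.
set c := (1 - delta) * \sum_(0 <= n < a) p0 n.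
have c0 : 0 <= c.
  rewrite /c mulr_ge0 ?subr_ge0 // big_nat_cond sumr_ge0 // => i /andP[/andP[_ ia] _].
  exact: p00.
pose BT := (\sum_(0 <= n <oo) \sum_(a <= r < b.+1) \sum_(1 <= u <oo) (p n r u)%:E)%E.
pose VT := (\sum_(0 <= n <oo) \sum_(1 <= u <oo) (Q n u)%:E)%E.
have HN' : (c%:E + BT + VT = 1)%E := HN.
have BT0 : (0 <= BT)%E.
  apply: nneseries_ge0 => n _ _; rewrite big_nat_cond; apply: sume_ge0 => r /andP[/andP[ar rb] _].
  by apply: nneseries_ge0 => u u1 _; rewrite lee_fin pge0 // ar -ltnS.
have VT0 : (0 <= VT)%E.
  by apply: nneseries_ge0 => n _ _; apply: nneseries_ge0 => u u1 _; rewrite lee_fin Qge0.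
have BTfin : (BT < +oo)%E.
  apply: (@le_lt_trans _ _ 1%E); last by rewrite ltry.
  rewrite -HN'; apply: (@le_trans _ _ (c%:E + BT)%E); first by rewrite leeDr // lee_fin.
  by rewrite leeDl.
have VTfin : (VT < +oo)%E.
  apply: (@le_lt_trans _ _ 1%E); last by rewrite ltry.
  by rewrite -HN' leeDr // adde_ge0 // lee_fin.
have BUSY := fun r (rab : (a <= r <= b)%N) =>
  match sP r rab with And4 s0 sge0 s1 sm =>
    @busy R a b lam delta g s p0 p Q r a1 ab lam0 lam1 dI g0 gge0 g1 s0 sge0 s1 sm
      p00 pge0 Qge0 E3 E4 E5 BTfin rab end.
pose Inj := Injf a b lam delta g p0 p Q.
pose Ae r := (if (r < b)%N then (Inj r)%:E else esum_from 0 (fun n => Inj (n + b)%N))%E.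
pose Ar r := fine (Ae r).
have Ar0 r : (a <= r <= b)%N -> 0 <= Ar r.
  by move=> rab; case: (BUSY r rab).
have [B0 finQ Vt1 Vts] := @vac R a b lam delta g v p Q a1 lam0 lam1 d0 g0 gge0 g1
  v0 vge0 v1 vmean pge0 Qge0 E6 E7 E8 VTfin.
set B := \sum_(0 <= n < a) KVf a b lam delta g p Q n in B0 Vt1 Vts.
have BTE : BT = (\sum_(a <= r < b.+1) Ar r * smean r)%:E.
  rewrite /BT nneseries_sum_range; last first.
    move=> r n /andP[ar rb]; apply: nneseries_ge0 => u u1 _.
    by rewrite lee_fin pge0 // ar -ltnS.
  rewrite -sumEFin; apply: eq_big_nat => r /andP[ar rb].
  have rab : (a <= r <= b)%N by rewrite ar -ltnS.
  case: (BUSY r rab) => _ _ _ fin1 HS.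
  rewrite inter_from; last by move=> i j j1; rewrite lee_fin pge0.
  rewrite -/(esum_from 1 _) -HS /esum_from; apply: eq_eseries_from => u u1.
  by rewrite fineK // fin1.
have VTE : VT = (B * EV)%:E.
  rewrite /VT inter_from; last by move=> i j j1; rewrite lee_fin Qge0.
  rewrite -Vts /esum_from; apply: eq_eseries_from => u u1.
  by rewrite fineK // finQ.
have tauEE : tauE a b p Q = (\sum_(a <= r < b.+1) Ar r + B)%:E.
  rewrite /tauE EFinD; congr (_ + _)%E.
    rewrite /esum_from; under eq_eseriesr do rewrite -sumEFin.
    rewrite nneseries_sum_range; last first.
      by move=> r n /andP[ar rb]; rewrite lee_fin pge0 // ar -ltnS.
    rewrite -sumEFin; apply: eq_big_nat => r /andP[ar rb].
    have rab : (a <= r <= b)%N by rewrite ar -ltnS.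
    case: (BUSY r rab) => _ _ HP1 fin1 _.
    by rewrite -/(esum_from 0 _) -(fineK (fin1 1%N isT)) HP1.
  by rewrite -Vt1 fineK // finQ.
have XE : 1 - c = \sum_(a <= r < b.+1) Ar r * smean r + B * EV.
  have H2 : (c + \sum_(a <= r < b.+1) Ar r * smean r + B * EV)%:E = 1%:E.
    by rewrite !EFinD -BTE -VTE.
  have H3 := EFin_inj H2; rewrite -H3; ring.
have tauE' : tau = \sum_(a <= r < b.+1) Ar r + B by rewrite /tau tauEE.
have sm1 r : (a <= r <= b)%N -> 1 <= smean r.
  by move=> rab; case: (sP r rab) => s0 sge0 s1 sm; exact: mean_ge1.
have EV1 : 1 <= EV by apply: mean_ge1.
have SA0 : 0 <= \sum_(a <= r < b.+1) Ar r.
  rewrite big_nat_cond sumr_ge0 // => r /andP[/andP[ar rb] _]; apply: Ar0.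
  by rewrite ar -ltnS.
have tau0 : 0 <= tau by rewrite tauE' addr_ge0.
have Xge : tau <= 1 - c.
  rewrite tauE' XE lerD //; last by rewrite ler_peMr.
  apply: ler_sum_nat => r /andP[ar rb].
  have rab : (a <= r <= b)%N by rewrite ar -ltnS.
  by rewrite ler_peMr // ?Ar0 ?sm1.
case: (eqVneq tau 0) => [t0|tn0].
  have /andP[/eqP SA /eqP BB] : (\sum_(a <= r < b.+1) Ar r == 0) && (B == 0).
    by rewrite -paddr_eq0 // -tauE' t0.
  have X0 : 1 - c = 0.
    rewrite XE BB mul0r addr0 big1_seq // => r.
    rewrite mem_index_iota => /andP[_ rab].
    have Ar0' k : (a <= k < b.+1)%N -> 0 <= Ar k.
      by move=> /andP[ak kb]; apply: Ar0; rewrite ak -ltnS.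
    by rewrite (@psum_nat_eq0 R Ar a b.+1 Ar0' SA r rab) mul0r.
  rewrite tauEE. rewrite -tauE'. rewrite t0. rewrite X0. by rewrite mul0e.
have I0 k := @Inj_ge0 R a b lam delta g p0 p Q k lamI d1 gge0 p00 pge0 Qge0.
have PQ0 n : 0 <= PPf a b lam g p n + QQf lam g Q n.
  by have [? ? _ _] := I0 n; apply: addr_ge0.
have bab : (a <= b <= b)%N by rewrite ab leqnn.
have ABD := @Ab_decomp R a b lam delta g p0 p Q ab lamI d1 gge0 g1 p00 pge0 Qge0.
have [Aebfin _ _ _ _] := BUSY b bab.
have Aeb : Ae b = esum_from 0 (fun n => Inj (n + b)%N) by rewrite /Ae ltnn.
set Zx := esum_from b.+1 (fun n => PPf a b lam g p n + QQf lam g Q n) in ABD.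
have Zx0 : (0 <= Zx)%E by apply: esum_ge0 => n _.
set T0 := (1 - delta) * lam * _ in ABD.
have T00 : 0 <= T0.
  rewrite /T0; apply: mulr_ge0; first by rewrite mulr_ge0 ?subr_ge0 // ltW.
  rewrite big_nat_cond; apply: sumr_ge0 => i /andP[/andP[_ ia] _].
  apply: mulr_ge0; first exact: p00.
  by apply: addr_ge0 => //; apply: fine_ge0; exact: esum_ge0.
have Zfin : Zx \is a fin_num.
  rewrite ge0_fin_numE //; apply: (@le_lt_trans _ _ (Ae b)); last first.
    by rewrite ltey_eq Aebfin.
  rewrite Aeb ABD -addeA.
  apply: (@le_trans _ _ (Zx + T0%:E)%E); first by rewrite leeDl // lee_fin.
  by rewrite leeDr // lee_fin; have [? ? _ _] := I0 b; apply: addr_ge0.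
rewrite omega_eq //.
have Ar_lt r : (a <= r < b)%N -> Ar r = PPf a b lam g p r + QQf lam g Q r
    + (1 - delta) * lam * \sum_(0 <= i < a) g (r - i)%N * p0 i.
  by case/andP => _ rb; rewrite /Ar /Ae rb.
have Ar_b : Ar b = PPf a b lam g p b + QQf lam g Q b + fine Zx + T0.
  rewrite /Ar Aeb ABD fineD ?fineD //=; last by rewrite fin_numD Zfin.
have BE : B = \sum_(0 <= n < a) (PPf a b lam g p n + delta * QQf lam g Q n).
  by apply: eq_bigr => n _; exact: KV_PPQQ.
have p0E : delta = 0 -> forall j, (j < a)%N ->
    lam * p0 j = \sum_(0 <= n < j.+1) e_coef g j n * QQf lam g Q n.
  move=> hd; apply: (@p0_sol R a b lam g p0 Q).
    by move: E1; rewrite hd.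
  by move=> n hn; move: (E2 n hn); rewrite hd.
have FI := @final_identity R a b lam delta tau EV (fine Zx) B g
  (fun k => fine (esum_from k g)) smean (PPf a b lam g p) (QQf lam g Q) p0 Ar
  hdelta tn0 ab Ar_lt Ar_b BE p0E.
rewrite -XE in FI.
have WE W : tau * W = 1 - c -> W = tau^-1 * (1 - c).
  by move=> <-; rewrite mulrA mulVf // mul1r.
rewrite (WE _ FI) tauEE -tauE'.
have tp : 0 < tau by rewrite lt_def tn0 tau0.
have Xp : 0 < 1 - c by apply: lt_le_trans Xge.
rewrite inver (negbTE (mulf_neq0 _ _)); last 2 first.
- by rewrite invr_eq0.
- by rewrite gt_eqF.
rewrite -EFinM; congr (_%:E); field.
by rewrite tn0 gt_eqF.
Qed.
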